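(* Let $b,n,c$ be positive integers with $2\leqslant 2b\leqslant n$, and let $\Gamma$ be an abelian group of order $2nbc$. If $\Gamma$ contains an element of order $n$, then there exists a diagonal $\mathrm{MRS}_\Gamma(n;2b;c)$. In particular, this holds if $n$ divides the exponent of $\Gamma$.
   Context: For positive integers $m,n,s,k,c$ and an abelian group $\Gamma$ of order $nkc$, an $\mathrm{MRS}_\Gamma(m,n;s,k;c)$ is a set of $c$ partially filled $m\times n$ arrays (some cells may be empty) with entries in $\Gamma$ such that: every element of $\Gamma$ appears exactly once and in a unique array; in every array each row contains exactly $s$ filled cells and each column contains exactly $k$ filled cells; and there exist $\omega,\delta\in\Gamma$ such that in every array each row sum is $\omega$ and each column sum is $\delta$. $\mathrm{MRS}_\Gamma(n;k;c)$ denotes $\mathrm{MRS}_\Gamma(n,n;k,k;c)$. In an $n\times n$ array, for $0\leqslant \ell\leqslant n-1$ the diagonal $D_\ell$ is the set of cells $(i,j)$ with $j-i\equiv \ell\pmod n$. An $\mathrm{MRS}_\Gamma(n;k;c)$ is diagonal if, in each of its arrays, the filled cells are exactly the cells of $k$ consecutive diagonals $D_{t},\ldots,D_{t+k-1}$ (indices modulo $n$). *)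

(* Defs.v *)
From mathcomp Require Import all_boot all_order all_fingroup all_solvable.
Set Implicit Arguments. Unset Strict Implicit. Unset Printing Implicit Defensive.
Import GroupScope.
Local Open Scope group_scope.

(* A (finite) abelian group Gamma is modelled as a finGroupType gT with
   [set: gT] abelian; the group law is written multiplicatively, so the
   "sum" of entries is the group product (order irrelevant by commutativity)
   and the neutral element is 1.

   A family of c partially filled m x n arrays with entries in gT is a map
   A : 'I_c -> 'I_m -> 'I_n -> option gT; None = empty cell. *)

Definition cell_val (gT : finGroupType) (x : option gT) : gT := odflt 1 x.

Definition is_MRS (gT : finGroupType) (m n s k c : nat)
    (A : 'I_c -> 'I_m -> 'I_n -> option gT) : Prop :=
  (forall g : gT,
      #|[set t : 'I_c * 'I_m * 'I_n | A t.1.1 t.1.2 t.2 == Some g]| = 1%N)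
  /\ (forall (a : 'I_c) (i : 'I_m), #|[set j : 'I_n | A a i j != None]| = s)
  /\ (forall (a : 'I_c) (j : 'I_n), #|[set i : 'I_m | A a i j != None]| = k)
  /\ (exists omega delta : gT,
        (forall (a : 'I_c) (i : 'I_m), \prod_(j < n) cell_val (A a i j) = omega)
        /\ (forall (a : 'I_c) (j : 'I_n), \prod_(i < m) cell_val (A a i j) = delta)).

(* Diagonal D_l = cells (i,j) with j - i = l (mod n).  The filled cells of
   array a are exactly those of D_t, ..., D_{t+k-1} (indices mod n), i.e.
   j = i + t + l (mod n) for some 0 <= l < k. *)
Definition is_diagonal_filling (gT : finGroupType) (n k c : nat)
    (A : 'I_c -> 'I_n -> 'I_n -> option gT) : Prop :=
  forall a : 'I_c, exists t : 'I_n, forall i j : 'I_n,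
    (A a i j != None) = [exists l : 'I_k, (i + t + l) %% n == j :> nat].

Definition diagonal_MRS (gT : finGroupType) (n k c : nat) : Prop :=
  exists A : 'I_c -> 'I_n -> 'I_n -> option gT,
    @is_MRS gT n n k k c A /\ @is_diagonal_filling gT n k c A.

(* Main.v *)
From HB Require Import structures.
From mathcomp Require Import all_boot all_order all_fingroup all_solvable.
From mathcomp Require Import zify.
Require Import Defs.
Import GroupScope.

Lemma mymodn_sub n m : n <= m < n + n -> m %% n = m - n.
Proof. move=> /andP[h1 h2]; rewrite -{1}(subnK h1) modnDr modn_small //; lia. Qed.

Lemma H1 n i l : i < n -> l < n -> ((i + l) %% n + n - i) %% n = l.
Proof.
move=> hi hl; case: (ltnP (i + l) n) => h.
  rewrite (modn_small h) (_ : i + l + n - i = l + n) ?modnDr ?modn_small //; lia.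
rewrite (mymodn_sub n (i + l)); last by lia.
rewrite (_ : i + l - n + n - i = l) ?modn_small //; lia.
Qed.

Lemma H2 n i j : i < n -> j < n -> (i + (j + n - i) %% n) %% n = j.
Proof.
move=> hi hj; case: (leqP i j) => h.
  rewrite (_ : j + n - i = (j - i) + n); last by lia.
  rewrite modnDr (@modn_small (j - i) n); last by lia.
  rewrite modn_small; lia.
rewrite (@modn_small (j + n - i) n); last by lia.
rewrite (mymodn_sub n); lia.
Qed.

Lemma H3 n j l : j < n -> l < n -> (j + n - (j + n - l) %% n) %% n = l.
Proof.
move=> hj hl; case: (leqP l j) => h.
  rewrite (_ : j + n - l = (j - l) + n); last by lia.
  rewrite modnDr (@modn_small (j - l) n); last by lia.
  rewrite (_ : j + n - (j - l) = l + n); last by lia.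
  by rewrite modnDr modn_small.
rewrite (@modn_small (j + n - l) n); last by lia.
rewrite modn_small; lia.
Qed.

Lemma H4 n e : e < n -> (n - (n - e) %% n) %% n = e.
Proof.
move=> he; case: e he => [|e] he.
  by rewrite subn0 modnn subn0 modnn.
rewrite (@modn_small (n - e.+1) n); last by lia.
rewrite modn_small; lia.
Qed.

Lemma H5 n i i' l : i < n -> i' < n -> (i + l) %% n = (i' + l) %% n -> i = i'.
Proof.
move=> hi hi' /eqP; rewrite eqn_modDr => /eqP; rewrite !modn_small //.
Qed.


Arguments H1 {n i l}. Arguments H2 {n i j}. Arguments H3 {n j l}. Arguments H4 {n e}. Arguments H5 {n i i'} l.

Lemma exists_w (gT : finGroupType) (x : gT) (m : nat) :
  abelian [set: gT] -> #|gT| = (#[x] * m.*2)%N ->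
  exists w : gT, forall g : gT, (g * g)^-1 * w \notin <[x]>.
Proof.
move=> ab cardG.
set H := <[x]>.
have nH : [set: gT] \subset 'N(H) by apply: sub_abelian_norm => //; apply: subsetT.
have inN : forall g : gT, g \in 'N(H) by move=> g; apply: (subsetP nH); rewrite inE.
have cQ : #|[set: coset_of H]| = m.*2.
  rewrite -quotientT card_quotient // .
  have := Lagrange (subsetT H); rewrite cardsT cardG -orderE => /eqP.
  by rewrite eqn_mul2l => /orP[/eqP o0|/eqP ->] //; move: (order_gt0 x); rewrite o0.
have [z _ oz] : {z | z \in [set: coset_of H] & #[z] = 2}.
  by apply: Cauchy => //; rewrite cQ -mul2n dvdn_mulr.
have [W nW] : exists W : coset_of H, W \notin codom (fun q => q * q).
  apply/existsP; apply: contraT; rewrite negb_exists => /forallP allin.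
  have : {in predT &, injective (fun q : coset_of H => q * q)}.
    apply/image_injP.
    rewrite eqn_leq leq_image_card /=.
    apply: subset_leq_card; apply/subsetP => q _.
    by have := allin q; rewrite negbK /codom.
  move=> /(_ z 1 isT isT); rewrite mulg1.
  have -> : z * z = 1 by rewrite -[z * z]/(z ^+ 2) -oz expg_order.
  move=> /(_ erefl) z1; move: oz; rewrite z1 order1 //.
exists (repr W) => g; apply/negP => /coset_id.
rewrite morphM ?inN // morphV ?inN // morphM ?inN //.
have cW : coset_morphism H (repr W) = W := coset_reprK W.
rewrite cW; move/eqP; rewrite -eq_mulVg1 => /eqP WE.
by move: nW; rewrite -WE; apply/negP; rewrite negbK; apply: (codom_f (fun q : coset_of H => q * q)).
Qed.

Section Constr.
Variables (gT : finGroupType) (x w : gT) (n b c : nat).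
Hypotheses (ab : abelian [set: gT]) (ox : #[x] = n) (hb : 0 < b) (hbn : (2 * b <= n)%N)
  (cardG : #|gT| = (2 * n * b * c)%N) (hw : forall g : gT, (g * g)^-1 * w \notin <[x]>).

Lemma mulgC' : commutative (@mulg gT).
Proof. move=> y z; have := centsP ab y (in_setT _) z (in_setT _). by move/commute_sym. Qed.
HB.instance Definition _ := SemiGroup.isCommutativeLaw.Build gT mulg mulgC'.

Lemma invMg' (y z : gT) : (y * z)^-1 = y^-1 * z^-1.
Proof. by rewrite invMg mulgC'. Qed.

Lemma hn : 0 < n. Proof. lia. Qed.

Definition R (g y : gT) : bool :=
  (g^-1 * y \in <[x]>) || ((w * g^-1)^-1 * y \in <[x]>).

Lemma memC_ratio (a d r : gT) : r \in <[x]> -> d = a * r -> (d \in <[x]>) = (a \in <[x]>).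
Proof. by move=> hr ->; rewrite groupMr. Qed.

Lemma R_refl g : R g g.
Proof. by rewrite /R mulVg group1. Qed.

Lemma R_trans {g y z : gT} : R g y -> R y z = R g z.
Proof.
rewrite /R => /orP[h|h].
- congr (_ || _).
  + apply: (@memC_ratio _ _ ((g^-1 * y)^-1)); first by rewrite groupV.
    rewrite !invMg' !invgK !mulgA.
    rewrite [RHS](AC (4) ((4*2)*(1*3))) /=. by rewrite mulVg mulg1.
  + apply: (@memC_ratio _ _ _ h); rewrite !invMg' !invgK !mulgA.
    rewrite [RHS](AC (5) (((1*5)*3)*(2*4))) /=. by rewrite mulgV mulg1.
- rewrite orbC; congr (_ || _).
  + apply: (@memC_ratio _ _ _ h); rewrite !invMg' !invgK !mulgA.
    rewrite [RHS](AC (5) (((3*5)*2)*(1*4))) /=. by rewrite mulVg mulg1.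
  + apply: (@memC_ratio _ _ (((w * g^-1)^-1 * y)^-1)); first by rewrite groupV.
    rewrite !invMg' !invgK !mulgA.
    rewrite [RHS](AC (6) ((6*3)*((1*4)*(2*5)))) /=. by rewrite mulVg mulgV !mulg1.
Qed.

Lemma R_sym g y : R g y -> R y g.
Proof. by move=> h; rewrite (R_trans h) R_refl. Qed.

Definition rep (g : gT) : gT := odflt g [pick y | R g y].

Lemma rep_R g : R g (rep g).
Proof. rewrite /rep; case: pickP => [y -> // | /(_ g)]; by rewrite R_refl. Qed.

Lemma rep_eq {g y : gT} : R g y -> rep y = rep g.
Proof. move=> h; rewrite /rep (eq_pick (fun z => R_trans h)); case: pickP => [//|/(_ y)]; by rewrite h. Qed.

Definition X : {set gT} := [set g | rep g == g].

Lemma X_rep g : rep g \in X.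
Proof. by rewrite inE (rep_eq (rep_R g)). Qed.

Definition Psi (t : gT) (s : bool) (i : nat) : gT :=
  if s then w * t^-1 * x ^+ i else t * x ^+ i.

Lemma R_Psi t s i : R t (Psi t s i).
Proof.
rewrite /R /Psi; case: s.
  by rewrite mulKg mem_cycle orbT.
by rewrite mulKg mem_cycle.
Qed.

Lemma R_inv t y : R t y -> exists s, exists2 i, i < n & y = Psi t s i.
Proof.
rewrite /R => /orP[h|h].
  have [i hi e] := cyclePmin h; exists false; exists i; first by rewrite -ox.
  by rewrite /Psi -e mulKVg.
have [i hi e] := cyclePmin h; exists true; exists i; first by rewrite -ox.
by rewrite /Psi -e mulKVg.
Qed.

Lemma Psi_surj y : exists s, exists2 i, i < n & y = Psi (rep y) s i.
Proof. exact/R_inv/R_sym/rep_R. Qed.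

Lemma expx_inj i i' : i < n -> i' < n -> x ^+ i = x ^+ i' -> i = i'.
Proof.
move=> hi hi' /eqP; rewrite eq_expg_mod_order ox !modn_small //; by move/eqP.
Qed.

Lemma Psi_inj t t' s s' i i' : t \in X -> t' \in X -> i < n -> i' < n ->
  Psi t s i = Psi t' s' i' -> [/\ t = t', s = s' & i = i'].
Proof.
rewrite !inE => /eqP Xt /eqP Xt' hi hi' E.
have tt' : t = t'.
  by rewrite -Xt -Xt' -(rep_eq (R_Psi t s i)) E (rep_eq (R_Psi t' s' i')).
subst t'.
have key : forall j j', t * x ^+ j = w * t^-1 * x ^+ j' -> False.
  move=> j j' e; move: (hw t); rewrite (_ : w = t * x ^+ j * (x ^+ j')^-1 * t).
    rewrite invMg' !mulgA (AC (6) (((1*3)*(2*6))*(4*5))) /= !mulVg !mul1g.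
    by rewrite groupM ?groupV ?mem_cycle.
  by rewrite e mulgK mulgKV.
case: s s' E => [] [] /= E.
- by split => //; apply: expx_inj => //; apply: (mulgI (w * t^-1)).
- by case: (key _ _ (esym E)).
- by case: (key _ _ E).
- by split => //; apply: expx_inj => //; apply: (mulgI t).
Qed.


Definition u (k : nat) : gT := nth 1 (enum X) k.

Lemma u_X k : k < #|X| -> u k \in X.
Proof. by rewrite cardE => h; rewrite -mem_enum mem_nth. Qed.

Lemma u_inj k k' : k < #|X| -> k' < #|X| -> u k = u k' -> k = k'.
Proof.
rewrite cardE => h h' /eqP; rewrite nth_uniq ?enum_uniq //; by move/eqP.
Qed.

Lemma u_surj t : t \in X -> exists2 k, k < #|X| & t = u k.
Proof.
move=> ht; exists (index t (enum X)); first by rewrite cardE index_mem mem_enum.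
by rewrite /u nth_index // mem_enum.
Qed.

Arguments u_X {k}. Arguments u_inj {k k'}. Arguments Psi_inj {t t' s s' i i'}.
Arguments u_surj {t}.

Lemma cardX : #|X| = (b * c)%N.
Proof.
pose F (p : 'I_#|X| * bool * 'I_n) : gT := Psi (u p.1.1) p.1.2 p.2.
have Finj : injective F.
  move=> [[k s] i] [[k' s'] i'] /= E.
  have [e1 e2 e3] := Psi_inj (u_X (ltn_ord k)) (u_X (ltn_ord k')) (ltn_ord i) (ltn_ord i') E.
  have ek := u_inj (ltn_ord k) (ltn_ord k') e1.
  move: e2 e3 => /= -> e3; by congr (_, _, _); apply: val_inj.
have cd : #|{: 'I_#|X| * bool * 'I_n}| = (#|X| * 2 * n)%N by rewrite !card_prod !card_ord card_bool.
have e : #|{: 'I_#|X| * bool * 'I_n}| = #|gT|.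
  apply/eqP; rewrite eqn_leq; apply/andP; split; first exact: leq_card Finj.
  rewrite -(card_codom Finj); apply: subset_leq_card; apply/subsetP => y _.
  have [s [i hi ->]] := Psi_surj y.
  have [k hk ->] := u_surj (X_rep y).
  by apply/codomP; exists (Ordinal hk, s, Ordinal hi).
move: e; rewrite cd cardG => e.
have : (#|X| * (2 * n) = (b * c) * (2 * n))%N by rewrite mulnA e; lia.
move/eqP; rewrite eqn_mul2r => /orP[|/eqP //]; have := hn; lia.
Qed.


Definition Aarr (a : 'I_c) (i j : 'I_n) : option gT :=
  let l := ((j + n - i) %% n)%N in
  if (l < 2 * b)%N then
    Some (Psi (u (a * b + l./2)%N) (odd l) (if odd l then ((n - i) %% n)%N else i))
  else None.

Lemma A_some a i j : (Aarr a i j != None) = (((j + n - i) %% n)%N < 2 * b)%N.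
Proof. by rewrite /Aarr; case: ifP. Qed.

Lemma card_lt (m : nat) : (m <= n)%N -> #|[set l : 'I_n | (l < m)%N]| = m.
Proof.
move=> hm.
have -> : [set l : 'I_n | (l < m)%N] = widen_ord hm @: [set: 'I_m].
  apply/setP => l; rewrite inE; apply/idP/imsetP.
    by move=> hl; exists (Ordinal hl) => //; apply: val_inj.
  by move=> [l' _ ->] /=.
rewrite card_imset ?cardsT ?card_ord //; by move=> p q /(congr1 val) /= e; apply: ord_inj.
Qed.

Lemma row_count a i : #|[set j | Aarr a i j != None]| = (2 * b)%N.
Proof.
pose rot (j : 'I_n) : 'I_n := Ordinal (ltn_pmod (j + n - i) hn).
have rinj : injective rot.
  move=> j j' /(congr1 val) /= e; apply: ord_inj.
  by rewrite -(H2 (ltn_ord i) (ltn_ord j)) e H2.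
have -> : [set j | Aarr a i j != None] = rot @^-1: [set l : 'I_n | (l < 2 * b)%N].
  by apply/setP => j; rewrite !inE A_some.
by rewrite card_preimset // card_lt.
Qed.

Lemma col_count a j : #|[set i | Aarr a i j != None]| = (2 * b)%N.
Proof.
pose rot (i : 'I_n) : 'I_n := Ordinal (ltn_pmod (j + n - i) hn).
have rinj : injective rot.
  move=> i i' /(congr1 val) /= e; apply: ord_inj.
  apply: (H5 ((j + n - i) %% n)%N) => //.
  by rewrite H2 // e H2.
have -> : [set i | Aarr a i j != None] = rot @^-1: [set l : 'I_n | (l < 2 * b)%N].
  by apply/setP => i; rewrite !inE A_some.
by rewrite card_preimset // card_lt.
Qed.

Lemma diag : @is_diagonal_filling gT n (2 * b) c Aarr.
Proof.
move=> a; exists (Ordinal hn) => i j; rewrite A_some /= addn0.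
apply/idP/existsP.
  move=> hl; exists (Ordinal hl) => /=; by rewrite H2.
move=> [l /eqP <-]; rewrite H1 //; apply: leq_trans hbn; done.
Qed.


Lemma prod_pairs (F : nat -> gT) m :
  \prod_(0 <= l < m.*2) F l = \prod_(0 <= p < m) (F p.*2 * F p.*2.+1).
Proof.
elim: m => [|m IH]; first by rewrite !big_geq.
by rewrite doubleS !big_nat_recr //= IH mulgA.
Qed.

Lemma split_prod (G : nat -> gT) :
  (forall l, (2 * b <= l)%N -> G l = 1) ->
  \prod_(0 <= l < n) G l = \prod_(0 <= p < b) (G p.*2 * G p.*2.+1).
Proof.
move=> G1; rewrite (@big_cat_nat _ _ _ (2 * b)%N) //=.
have -> : \prod_((2 * b)%N <= l < n) G l = 1.
  by rewrite big_nat_cond big1 // => l /andP[/andP[h1 _] _]; apply: G1.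
rewrite mulg1.
by rewrite mul2n prod_pairs.
Qed.

Lemma row_pair t i : (i < n)%N -> t * x ^+ i * (w * t^-1 * x ^+ ((n - i) %% n)) = w.
Proof.
move=> hi; have e : x ^+ i * x ^+ ((n - i) %% n) = 1.
  by rewrite -ox expg_mod_order -expgD subnKC ?expg_order // ox ltnW.
rewrite !mulgA (AC (5) (((1*4)*(2*5))*3)) /=.
by rewrite mulgV e !mul1g.
Qed.

Lemma xpair J : x ^+ ((J.+1) %% n) * x ^+ ((n - J %% n) %% n) = x.
Proof.
rewrite -ox !expg_mod_order -expgD.
have hN : (0 < #[x])%N by rewrite ox hn.
have hr := ltn_pmod J hN.
have := divn_eq J #[x].
set q := (J %/ #[x])%N; set r := (J %% #[x])%N => eJ.
have -> : (J.+1 + (#[x] - r) = #[x] * q.+1 + 1)%N.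
  rewrite mulnS mulnC; move: eJ hr; set N := #[x]; set Q := (q * N)%N. lia.
by rewrite expgD expgM expg_order expg1n mul1g expg1.
Qed.

Lemma col_pair t J : t * x ^+ ((J.+1) %% n) * (w * t^-1 * x ^+ ((n - J %% n) %% n)) = w * x.
Proof.
rewrite !mulgA (AC (5) ((1*4)*(3*(2*5)))) /=.
by rewrite mulgV mul1g xpair.
Qed.

Lemma row_prod a i : \prod_(j < n) cell_val (Aarr a i j) = \prod_(0 <= p < b) w.
Proof.
pose sg (l : 'I_n) : 'I_n := Ordinal (ltn_pmod (i + l) hn).
have sginj : injective sg.
  move=> l l' /(congr1 val) /= e; apply: ord_inj.
  by rewrite -(H1 (ltn_ord i) (ltn_ord l)) e H1.
rewrite (reindex_inj sginj) /=.
pose G l := cell_val (if (l < 2 * b)%N then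
    Some (Psi (u (a * b + l./2)%N) (odd l) (if odd l then ((n - i) %% n)%N else i))
  else None).
transitivity (\prod_(0 <= l < n) G l).
  rewrite big_mkord; apply: eq_bigr => l _; by rewrite /Aarr /= H1.
rewrite split_prod; last by move=> l hl; rewrite /G ltnNge hl.
apply: eq_big_nat => p /andP[_ hp].
have h1 : (p.*2 < 2 * b)%N by lia.
have h2 : (p.*2.+1 < 2 * b)%N by lia.
rewrite /G h1 h2 /= odd_double /= half_double uphalf_double /Psi /=.
exact: row_pair.
Qed.

Lemma col_prod a j : \prod_(i < n) cell_val (Aarr a i j) = \prod_(0 <= p < b) (w * x).
Proof.
pose sg (l : 'I_n) : 'I_n := Ordinal (ltn_pmod (j + n - l) hn).
have sginj : injective sg.
  move=> l l' /(congr1 val) /= e; apply: ord_inj.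
  by rewrite -(H3 (ltn_ord j) (ltn_ord l)) e H3.
rewrite (reindex_inj sginj) /=.
pose G l := cell_val (if (l < 2 * b)%N then
    Some (Psi (u (a * b + l./2)%N) (odd l)
      (if odd l then ((n - (j + n - l) %% n) %% n)%N else ((j + n - l) %% n)%N))
  else None).
transitivity (\prod_(0 <= l < n) G l).
  rewrite big_mkord; apply: eq_bigr => l _; by rewrite /Aarr /= H3.
rewrite split_prod; last by move=> l hl; rewrite /G ltnNge hl.
apply: eq_big_nat => p /andP[_ hp].
have h1 : (p.*2 < 2 * b)%N by lia.
have h2 : (p.*2.+1 < 2 * b)%N by lia.
rewrite /G h1 h2 /= odd_double /= half_double uphalf_double /Psi /=.
have -> : (j + n - p.*2 = (j + n - p.*2.+1).+1)%N by lia.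
exact: col_pair.
Qed.


Lemma once g :
  #|[set t : 'I_c * 'I_n * 'I_n | Aarr t.1.1 t.1.2 t.2 == Some g]| = 1%N.
Proof.
have [s [e he eg]] := Psi_surj g.
have [k hk ek] := u_surj (X_rep g); rewrite cardX in hk.
rewrite ek in eg.
have ha : (k %/ b < c)%N by rewrite ltn_divLR // mulnC.
have hp : (k %% b < b)%N by rewrite ltn_pmod.
set a := (k %/ b)%N in ha; set p := (k %% b)%N in hp.
set l := (s + p.*2)%N.
have hs : (s <= 1)%N by case: (s).
have hl : (l < 2 * b)%N by rewrite /l; lia.
have hln : (l < n)%N by lia.
set i := if s then ((n - e) %% n)%N else e.
have hi : (i < n)%N by rewrite /i; case: (s) => //; rewrite ltn_pmod // hn.
have hj : ((i + l) %% n < n)%N by rewrite ltn_pmod // hn.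
have hie : (if s then ((n - i) %% n)%N else i) = e by rewrite /i; case: (s) => //; rewrite H4.
have hls : odd l = s by rewrite /l oddD odd_double addbF; case: (s).
have hlp : l./2 = p by rewrite /l half_bit_double.
have hk' : (a * b + p)%N = k by rewrite /a /p -divn_eq.
rewrite (_ : [set _ | _] = [set (Ordinal ha, Ordinal hi, Ordinal hj)]) ?cards1 //.
apply/setP => [[[a' i'] j']]; rewrite !inE /=.
apply/eqP/eqP.
- rewrite /Aarr /=; set l' := ((j' + n - i') %% n)%N; case: ifP => // hl' [E].
  have hp' : (l'./2 < b)%N by rewrite ltn_half_double -mul2n.
  have hk2 : (a' * b + l'./2 < #|X|)%N.
    rewrite cardX; have ha' := ltn_ord a'; nia.
  have he' : ((if odd l' then ((n - i') %% n)%N else i') < n)%N.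
    by case: (odd l') => //; rewrite ltn_pmod // hn.
  have hkX : (k < #|X|)%N by rewrite cardX.
  have [E1 E2 E3] := Psi_inj (u_X hk2) (u_X hkX) he' he (etrans E eg).
  have E4 := u_inj hk2 hkX E1.
  have ea : a' = a :> nat by rewrite /a -E4 divnMDl // divn_small // addn0.
  have ep : l'./2 = p by rewrite /p -E4 modnMDl modn_small.
  have el : l' = l by rewrite /l -E2 -ep odd_double_half.
  have ei : i' = i :> nat.
    rewrite /i -E2 -E3; case: (odd l') => //; by rewrite H4.
  have ej : j' = (i + l) %% n :> nat.
    by rewrite -el -ei /l' H2.
  by congr (_, _, _); apply: ord_inj.
- case=> -> -> ->; rewrite /Aarr /= H1 // hl.
  by rewrite hls hlp hk' hie eg.
Qed.

Lemma construction : diagonal_MRS gT n (2 * b) c.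
Proof.
exists Aarr; split; last exact: diag.
split; first exact: once.
split; first exact: row_count.
split; first exact: col_count.
exists (\prod_(0 <= p < b) w), (\prod_(0 <= p < b) (w * x)); split.
  exact: row_prod.
exact: col_prod.
Qed.

End Constr.

Theorem corollary5p7 (gT : finGroupType) (b n c : nat) :
  (0 < b)%N -> (0 < n)%N -> (0 < c)%N -> (2 <= 2 * b <= n)%N ->
  abelian [set: gT] ->
  #|gT| = (2 * n * b * c)%N ->
  ((exists x : gT, #[x]%g = n) -> diagonal_MRS gT n (2 * b) c)
  /\ ((n %| exponent [set: gT])%N -> diagonal_MRS gT n (2 * b) c).
Proof.
move=> hb hn hc /andP[h2 hbn] ab cardG.
have main : (exists x : gT, #[x]%g = n) -> diagonal_MRS gT n (2 * b) c.
  move=> [x ox].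
  have E : #|gT| = (#[x] * (b * c).*2)%N by rewrite cardG ox -mul2n; nia.
  have [w hw] := @exists_w gT x (b * c)%N ab E.
  by eapply construction; eassumption.
split => // hdvd; apply: main.
have [x0 _ ex] := exponent_witness (abelian_nil ab).
rewrite ex in hdvd.
have hq : (0 < #[x0] %/ n)%N by rewrite divn_gt0 // dvdn_leq.
exists (x0 ^+ (#[x0] %/ n)).
rewrite orderXdiv.
  by rewrite -{1}(divnK hdvd) mulKn.
by rewrite -{2}(divnK hdvd) dvdn_mulr.
Qed.
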